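(* For each $T$ and each $z\in L_T$, $\mathbb{P}$-almost surely the infimum in the definition of $h_T(z)$ is attained for some finite sequence $y_0,\dots,y_n\in L_T$ with $y_0=z$, $y_n=0$.
   Context: $(\xi(z))_{z\in\mathbb{Z}^d}$ are i.i.d. with $\mathbb{P}(\xi(z)>x)=x^{-\alpha}$ for $x\ge1$, $\alpha>d$. $|\cdot|$ is the $\ell_1$-norm. $q=d/(\alpha-d)$, $a(T)=(T/\log T)^q$, $r(T)=(T/\log T)^{q+1}$, $L_T=\{z\in\mathbb{R}^d:r(T)z\in\mathbb{Z}^d\}$, $\xi_T(z)=\xi(r(T)z)/a(T)$. For $z\in L_T$, \[h_T(z)=\inf\Big\{\sum_{j=1}^n q\frac{|y_{j-1}-y_j|}{\xi_T(y_j)}: n\ge0,\ y_0,\dots,y_n\in L_T,\ y_0=z,\ y_n=0\Big\}.\] *)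

(* Defs.v *)
From HB Require Import structures.
From mathcomp Require Import all_boot all_order all_algebra.
From mathcomp Require Import all_classical all_reals all_analysis.
Set Implicit Arguments.
Unset Strict Implicit.
Unset Printing Implicit Defensive.
Import Order.TTheory GRing.Theory Num.Theory.
Local Open Scope classical_set_scope.
Local Open Scope ring_scope.

Definition mutually_independent (dm : measure_display) (Omega : measurableType dm)
  (R : realType) (P : probability Omega R) (I : eqType) (X : I -> Omega -> R) : Prop :=
  forall (s : seq I) (B : I -> set R), uniq s -> (forall i, measurable (B i)) ->
    P (\bigcap_(i in [set` s]) (X i @^-1` B i)) =
    (\prod_(i <- s) P (X i @^-1` B i))%E.

Definition pareto_field (dm : measure_display) (Omega : measurableType dm)
  (R : realType) (P : probability Omega R) (d : nat) (alpha : R)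
  (xi : 'rV[int]_d -> Omega -> R) : Prop :=
  [/\ forall z, measurable_fun setT (xi z),
      mutually_independent P xi &
      forall z (x : R), 1 <= x ->
        P (xi z @^-1` `]x, +oo[) = (x `^ (- alpha))%:E].

Section Scaling.
Variables (R : realType) (d : nat) (alpha : R).

Definition norm1 (z : 'rV[R]_d) : R := \sum_(i < d) `|z 0 i|.

Definition qexp : R := d%:R / (alpha - d%:R).
Definition aT (T : R) : R := (T / ln T) `^ qexp.
Definition rT (T : R) : R := (T / ln T) `^ (qexp + 1).

Definition inLT (T : R) (z : 'rV[R]_d) : Prop :=
  exists k : 'rV[int]_d, rT T *: z = map_mx (fun n : int => n%:~R) k.

(* the lattice point r(T) z (exact for z in L_T) *)
Definition lattice_pt (T : R) (z : 'rV[R]_d) : 'rV[int]_d :=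
  \row_i Num.floor (rT T * z 0 i).

Definition xiT (xi : 'rV[int]_d -> R) (T : R) (z : 'rV[R]_d) : R :=
  xi (lattice_pt T z) / aT T.

(* cost of the path x = y_0, y_1, ..., y_n (ys = [:: y_1; ...; y_n]) *)
Fixpoint path_cost (xi : 'rV[int]_d -> R) (T : R) (x : 'rV[R]_d)
    (ys : seq 'rV[R]_d) : R :=
  match ys with
  | [::] => 0
  | y :: ys' => qexp * norm1 (x - y) / xiT xi T y + path_cost xi T y ys'
  end.

(* admissible paths from z to 0 in L_T (z itself is assumed in L_T) *)
Definition admissible (T : R) (z : 'rV[R]_d) (ys : seq 'rV[R]_d) : Prop :=
  (forall y, y \in ys -> inLT T y) /\ last z ys = 0.

Definition hT (xi : 'rV[int]_d -> R) (T : R) (z : 'rV[R]_d) : R :=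
  inf [set path_cost xi T z ys | ys in admissible T z].

End Scaling.

(* Main.v *)
Require Import Defs.
From HB Require Import structures.
From mathcomp Require Import all_boot all_order all_algebra.
From mathcomp Require Import all_classical all_reals all_analysis.
From mathcomp Require Import ring lra zify.
Import Order.TTheory GRing.Theory Num.Theory.
Local Open Scope classical_set_scope.
Local Open Scope ring_scope.
Lemma NNPP (Q : Prop) : ~ ~ Q -> Q.
Proof. by move=> h; case: (pselect Q) => // /h. Qed.

Lemma aux_le t : (1 <= t)%N -> ((2 * t).+1 <= 4 * t)%N.
Proof. lia. Qed.

Fixpoint lists (A : Type) (F : seq A) n : seq (seq A) :=
  if n is n'.+1 then [::] :: [seq x :: l | x <- F, l <- @lists A F n'] else [:: [::]].

Lemma mem_lists (A : eqType) (F : seq A) n ys :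
  (size ys <= n)%N -> all (mem F) ys -> ys \in @lists A F n.
Proof.
elim: n ys => [|n IH] [|y ys] //=; try by rewrite mem_head.
rewrite ltnS => hs /andP[hy hys]; rewrite inE; apply/orP; right.
by apply: (allpairs_f (fun x l => x :: l)) => //; exact: IH.
Qed.

Lemma min_exists (R : realType) (A : eqType) (s : seq A) (p : A -> Prop) (f : A -> R) :
  (exists a, a \in s /\ p a) ->
  exists a, [/\ a \in s, p a & forall b, b \in s -> p b -> f a <= f b].
Proof.
elim: s => [|x s IH] [a0 [ha0 pa0]]; first by [].
have [hs|hs] := pselect (exists a, a \in s /\ p a).
  have [b [bs pb hb]] := IH hs.
  have [px|px] := pselect (p x).
    have [fxb|fxb] := leP (f x) (f b).
      exists x; split; [exact: mem_head| exact: px|] => c; rewrite inE => /orP[/eqP->//|cs] pc.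
      exact: le_trans fxb (hb _ cs pc).
    exists b; split; [by rewrite inE bs orbT| exact: pb|] => c; rewrite inE => /orP[/eqP->//|cs] pc.
      exact: ltW.
    exact: hb.
  exists b; split; [by rewrite inE bs orbT| exact: pb|] => c; rewrite inE => /orP[/eqP->//|cs] pc.
  exact: hb.
exists x; split; [exact: mem_head| |].
  move: ha0; rewrite inE => /orP[/eqP<-//|h]; by exfalso; apply: hs; exists a0.
move=> c; rewrite inE => /orP[/eqP->//|cs] pc; by exfalso; apply: hs; exists c.
Qed.

Lemma bernoulli_ineq (R : realType) (h : R) n : 0 <= h -> 1 + n%:R * h <= (1 + h) ^+ n.
Proof.
move=> h0; elim: n => [|n IH]; first by rewrite mul0r addr0 expr0.
rewrite exprS -natr1 mulrDl mul1r.
have hp : 0 <= (1 + h) ^+ n by rewrite exprn_ge0 // addr_ge0.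
have : (1 + n%:R * h) * (1 + h) <= (1 + h) ^+ n * (1 + h).
  by rewrite ler_wpM2r // addr_ge0.
have : 0 <= n%:R * h * h by rewrite !mulr_ge0.
rewrite mulrC. nra.
Qed.
Lemma ratio_eq (R : realType) (q a r th : R) n : 0 < r -> 0 < th ->
  q * a / (r * th ^+ n.+1) * (2 ^+ n.+1 - 2 ^+ n) = q * a / (r * th) * (2 / th) ^+ n.
Proof.
move=> r0 th0; rewrite expr_div_n !exprS.
set u := 2 ^+ n; set v := th ^+ n.
have v0 : v != 0 by rewrite gt_eqF // exprn_gt0.
field. by rewrite v0 !gt_eqF.
Qed.

Definition boxv (d m : nat) (f : {ffun 'I_d -> 'I_(2 * m).+1}) : 'rV[int]_d :=
  \row_i ((f i : nat)%:Z - m%:Z).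

Lemma boxv_surj d m (x : 'rV[int]_d) : (forall i, `|x 0 i| <= m%:Z) ->
  exists f, boxv d m f = x.
Proof.
move=> hx; exists [ffun i => inord (absz (x 0 i + m%:Z)%R)].
apply/rowP => i; rewrite !mxE ffunE inordK; last by have := hx i; lia.
by rewrite gez0_abs ?addrK //; have := hx i; lia.
Qed.

Section Det.
Variables (R : realType) (d : nat) (alpha T : R) (xi : 'rV[int]_d -> R).
Hypotheses (q0 : 0 < qexp d alpha) (a0 : 0 < aT d alpha T) (r0 : 0 < rT d alpha T)
  (xi1 : forall x, 1 < xi x).

Local Notation cost := (path_cost alpha xi T).
Local Notation q := (qexp d alpha).
Local Notation r := (rT d alpha T).
Local Notation a := (aT d alpha T).

Lemma norm1_ge0 (x : 'rV[R]_d) : 0 <= norm1 x.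
Proof. by apply: sumr_ge0 => i _. Qed.

Lemma norm1_triangle (x y : 'rV[R]_d) : norm1 x <= norm1 (x - y) + norm1 y.
Proof.
rewrite /norm1 -big_split /=; apply: ler_sum => i _.
by rewrite !mxE -[X in `|X|](subrK (y 0 i)) ler_normD.
Qed.

Lemma xiT_gt0 y : 0 < xiT alpha xi T y.
Proof. by rewrite /xiT divr_gt0 // (lt_trans _ (xi1 _)). Qed.

Lemma step_ge0 x y : 0 <= q * norm1 (x - y) / xiT alpha xi T y.
Proof.
apply: divr_ge0; last exact: ltW (xiT_gt0 _).
by apply: mulr_ge0; [exact: ltW | exact: norm1_ge0].
Qed.

Lemma cost_ge0 x ys : 0 <= cost x ys.
Proof.
elim: ys x => [|y ys IH] x /=; first by [].
by rewrite addr_ge0 ?step_ge0.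
Qed.

Lemma cost_cat x s t : cost x (s ++ t) = cost x s + cost (last x s) t.
Proof.
elim: s x => [|y s IH] x /=; first by rewrite add0r.
by rewrite IH addrA.
Qed.

Lemma reduce ys x : exists ys', [/\ uniq ys', {subset ys' <= ys},
  last x ys' = last x ys & cost x ys' <= cost x ys].
Proof.
elim: ys x => [|y ys IH] x; first by exists [::].
have [s [us ss ls cs]] := IH y.
have [ys_in|ys_notin] := boolP (y \in s).
  case/splitPr: ys_in us ss ls cs => b c us ss ls cs.
  exists (y :: c); split.
  - by move: us; rewrite cat_uniq => /and3P[_ _ ->].
  - move=> u; rewrite inE => /orP[/eqP->|uc]; first by rewrite mem_head.
    by rewrite inE ss ?orbT // mem_cat inE uc !orbT.
  - by rewrite /= -ls last_cat.
  - rewrite /= lerD2l; apply: le_trans cs.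
    rewrite -cat_rcons cost_cat last_rcons lerDr.
    exact: cost_ge0.
exists (y :: s); split.
- by rewrite /= ys_notin us.
- move=> u; rewrite !inE => /orP[->//|/ss->]; by rewrite orbT.
- by [].
- by rewrite /= lerD2l.
Qed.


Lemma lattice_inLT y : inLT alpha T y -> exists k : 'rV[int]_d,
  lattice_pt alpha T y = k /\ forall i, (k 0 i)%:~R = r * y 0 i.
Proof.
case=> k hk.
have hi i : (k 0 i)%:~R = r * y 0 i.
  by move/matrixP: hk => /(_ 0 i); rewrite !mxE => ->.
exists k; split=> //; apply/rowP => i.
by rewrite mxE -hi intrKfloor.
Qed.

Lemma coord_le_norm1 (y : 'rV[R]_d) i : `|y 0 i| <= norm1 y.
Proof. by rewrite /norm1 (bigD1 i) //= lerDl sumr_ge0. Qed.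

Variable theta : R.
Hypothesis theta0 : 0 < theta.
Definition growth k := forall x : 'rV[int]_d,
  (forall i, `|(x 0 i)%:~R : R| <= 2 ^+ k) -> xi x <= theta ^+ k.

Lemma box_bound k y : growth k -> inLT alpha T y -> r * norm1 y <= 2 ^+ k ->
  xi (lattice_pt alpha T y) <= theta ^+ k.
Proof.
move=> G /lattice_inLT [kv [-> hi]] hy; apply: G => i.
rewrite hi normrM (gtr0_norm r0); apply: le_trans hy.
by rewrite ler_wpM2l ?(ltW r0) // coord_le_norm1.
Qed.

Section Far.
Variable k : nat.
Hypothesis Gk : growth k.+1.
Let c := q * a / (r * theta ^+ k.+1).
Let g (x : 'rV[R]_d) := Num.min (r * norm1 x) (2 ^+ k.+1) - 2 ^+ k.

Lemma c_ge0 : 0 <= c.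
Proof.
rewrite /c; apply: divr_ge0; first by apply: mulr_ge0; exact: ltW.
by apply: mulr_ge0; [exact: ltW| exact: exprn_ge0 (ltW _)].
Qed.

Lemma far_aux ys : forall x, (forall y, y \in ys -> inLT alpha T y) ->
  r * norm1 (last x ys) <= 2 ^+ k -> c * g x <= cost x ys.
Proof.
elim: ys => [|y ys IH] x hin hl /=.
  apply: mulr_ge0_le0; first exact: c_ge0.
  by rewrite subr_le0 ge_min hl.
have hy : inLT alpha T y by apply: hin; rewrite mem_head.
have IHy : c * g y <= cost y ys.
  by apply: IH hl => u hu; apply: hin; rewrite inE hu orbT.
have hst := step_ge0 x y.
have [hyM|hyM] := leP (r * norm1 y) (2 ^+ k.+1).
  have hxi := @box_bound k.+1 y Gk hy hyM.
  have hxi0 : 0 < xi (lattice_pt alpha T y) := lt_trans ltr01 (xi1 _).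
  have hgy : g y = r * norm1 y - 2 ^+ k by rewrite /g min_l.
  have hgx : g x - g y <= r * norm1 (x - y).
    rewrite hgy /g; have := norm1_triangle x y.
    have : Num.min (r * norm1 x) (2 ^+ k.+1) <= r * norm1 x by rewrite ge_min lexx.
    move=> h1 h2; have : r * norm1 x <= r * (norm1 (x - y) + norm1 y).
      by rewrite ler_wpM2l // ltW.
    rewrite mulrDr; lra.
  have hcs : c * (r * norm1 (x - y)) <= q * norm1 (x - y) / xiT alpha xi T y.
    rewrite /xiT invf_div /c.
    have -> : q * a / (r * theta ^+ k.+1) * (r * norm1 (x - y)) =
      (q * norm1 (x - y) * a) / theta ^+ k.+1.
      field; apply/andP; split; rewrite gt_eqF //; exact: exprn_gt0.
    rewrite mulrA ler_wpM2l ?lef_pV2 ?posrE //; last exact: exprn_gt0.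
    by apply: mulr_ge0; [apply: mulr_ge0; [exact: ltW | exact: norm1_ge0] | exact: ltW].
  have : c * (g x - g y) <= c * (r * norm1 (x - y)) by rewrite ler_wpM2l // c_ge0.
  rewrite mulrBr; lra.
have hgy : g y = 2 ^+ k.+1 - 2 ^+ k by rewrite /g min_r // ltW.
have : g x <= g y by rewrite hgy /g lerD2r ge_min lexx orbT.
move=> /(ler_wpM2l c_ge0); lra.
Qed.

Lemma far z ys y : admissible alpha T z ys -> y \in ys ->
  2 ^+ k.+1 < r * norm1 y -> c * (2 ^+ k.+1 - 2 ^+ k) <= cost z ys.
Proof.
move=> [hin hl] hys hyM; case/splitPr: hys hin hl => s t hin hl.
have hgy : g y = 2 ^+ k.+1 - 2 ^+ k by rewrite /g min_r // ltW.
have h := @far_aux t y _ _.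
rewrite -hgy; apply: le_trans (h _ _) _.
- by move=> u hu; apply: hin; rewrite mem_cat inE hu !orbT.
- move: hl; rewrite last_cat /= => ->.
  have -> : norm1 (0 : 'rV[R]_d) = 0 by rewrite /norm1 big1 // => i _; rewrite mxE normr0.
  by rewrite mulr0 exprn_ge0.
rewrite cost_cat /= addrA lerDr addr_ge0 ?step_ge0 //; exact: cost_ge0.
Qed.
End Far.

Definition boxF m : seq 'rV[R]_d :=
  [seq r^-1 *: map_mx (fun n : int => n%:~R) (boxv d m f) |
     f <- enum {ffun 'I_d -> 'I_(2 * m).+1}].

Lemma inF m y : inLT alpha T y -> r * norm1 y <= m%:R -> y \in boxF m.
Proof.
move=> hy hm; have [kv [_ hi]] := @lattice_inLT y hy.
case: hy => kv' hk.
have ekv : kv' = kv.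
  apply/rowP => i; move/matrixP: hk => /(_ 0 i); rewrite !mxE -hi => /eqP.
  by rewrite eqr_int => /eqP.
subst kv'.
have [f hf] : exists f, boxv d m f = kv.
  apply: boxv_surj => i; rewrite -(ler_int R) intr_norm hi normrM (gtr0_norm r0).
  apply: le_trans hm; rewrite ler_wpM2l ?(ltW r0) //; exact: coord_le_norm1.
apply/mapP; exists f; first by rewrite mem_enum.
by rewrite hf -hk scalerA mulVf ?scale1r // gt_eqF.
Qed.

Lemma inLT0 : inLT alpha T (0 : 'rV[R]_d).
Proof. by exists 0; rewrite scaler0; apply/rowP => i; rewrite !mxE. Qed.

Theorem det_main (ht : theta < 2) (K0 : nat)
  (G : forall k, (K0 <= k)%N -> growth k) z :
  exists ys, admissible alpha T z ys /\ cost z ys = hT alpha xi T z.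
Proof.
set c0 := cost z [:: 0].
set C1 := q * a / (r * theta).
have C1gt0 : 0 < C1 by rewrite /C1; apply: divr_gt0; apply: mulr_gt0.
set rho := 2 / theta.
have rho1 : 1 < rho by rewrite /rho ltr_pdivlMr // mul1r.
have [k [hk hck]] : exists k, (K0 <= k)%N /\
    c0 < q * a / (r * theta ^+ k.+1) * (2 ^+ k.+1 - 2 ^+ k).
  have c00 : 0 <= c0 / (C1 * (rho - 1)).
    by rewrite divr_ge0 ?cost_ge0 // ltW // mulr_gt0 // subr_gt0.
  set N := Num.Def.archi_bound (c0 / (C1 * (rho - 1))).
  exists (K0 + N)%N; split; first exact: leq_addr.
  have -> : q * a / (r * theta ^+ (K0 + N).+1) * (2 ^+ (K0 + N).+1 - 2 ^+ (K0 + N))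
      = C1 * rho ^+ (K0 + N).
    by rewrite /C1 /rho ratio_eq.
  have h01 : 0 <= rho - 1 by rewrite subr_ge0 ltW.
  have hb := @bernoulli_ineq R (rho - 1) (K0 + N) h01.
  have e1 : 1 + (rho - 1) = rho by rewrite addrC subrK.
  rewrite e1 in hb.
  have hN := archi_boundP c00; rewrite -/N in hN.
  have hpos : 0 < C1 * (rho - 1) by rewrite mulr_gt0 // subr_gt0.
  have hN2 : c0 / (C1 * (rho - 1)) < (K0 + N)%:R.
    by apply: lt_le_trans hN _; rewrite ler_nat leq_addl.
  rewrite ltr_pdivrMr // mulrCA in hN2.
  have : c0 < C1 * ((K0 + N)%:R * (rho - 1)) by [].
  move=> h; apply: lt_le_trans h _; rewrite ler_wpM2l ?(ltW C1gt0) //.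
  by apply: le_trans hb; rewrite lerDr.
set m := (2 ^ k.+1)%N.
have hm : m%:R = 2 ^+ k.+1 :> R by rewrite /m natrX.
set F := boxF m.
set cands := @lists _ F (size F).
have adm0 : admissible alpha T z [:: 0].
  by split=> // u; rewrite inE => /eqP->; exact: inLT0.
have F0 : (0 : 'rV[R]_d) \in F.
  apply: inF; first exact: inLT0.
  have -> : norm1 (0 : 'rV[R]_d) = 0 by rewrite /norm1 big1 // => i _; rewrite mxE normr0.
  by rewrite mulr0.
have c0in : [:: 0] \in cands.
  apply: mem_lists; last by rewrite /= F0.
  by move: F0; case: (F).
have [ys [ysin ysadm ysmin]] := @min_exists R _ cands (admissible alpha T z) (cost z)
   (ex_intro _ _ (conj c0in adm0)).
have lb : forall ys', admissible alpha T z ys' -> cost z ys <= cost z ys'.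
  move=> ys' [hin' hl'].
  have [s [us ss ls cs]] := reduce ys' z.
  apply: le_trans cs.
  have sadm : admissible alpha T z s by split=> [u /ss /hin'|] //; rewrite ls.
  have [hfar|hnear] := pselect (exists y, y \in s /\ 2 ^+ k.+1 < r * norm1 y).
    case: hfar => y [ys1 yfar].
    have := @far k (G k.+1 (leqW hk)) z s y sadm ys1 yfar => h.
    have h1 := ysmin _ c0in adm0.
    have h3 := ltW hck.
    move: h h1 h3; rewrite -/c0; lra.
  have sF : {subset s <= F}.
    move=> u us'; apply: inF; first exact: hin' (ss _ us').
    rewrite hm leNgt; apply/negP => hu; apply: hnear; by exists u.
  apply: ysmin => //; apply: mem_lists; first exact: uniq_leq_size.
  exact/allP.
exists ys; split => //.
have E0 : [set path_cost alpha xi T z ys0 | ys0 in admissible alpha T z] (cost z ys).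
  by exists ys.
apply/eqP; rewrite eq_le; apply/andP; split.
  apply: lb_le_inf; first by exists (cost z ys).
  by move=> x [ys' hys' <-]; apply: lb.
apply: ge_inf => //; exists (cost z ys) => x [ys' hys' <-]; exact: lb.
Qed.

End Det.
Lemma bigsetU_sub (T : Type) (I : eqType) (s : seq I) (A : I -> set T) i :
  i \in s -> A i `<=` \big[setU/set0]_(j <- s) A j.
Proof.
elim: s => [|j s IH] //; rewrite inE big_cons => /orP[/eqP->|h] x hx; first by left.
by right; exact: IH.
Qed.

Lemma measure_bigsetU_le dm (Omega : measurableType dm) (R : realType)
  (P : {measure set Omega -> \bar R}) (I : Type) (s : seq I) (A : I -> set Omega) :
  (forall i, measurable (A i)) ->
  (P (\big[setU/set0]_(i <- s) A i) <= \sum_(i <- s) P (A i))%E.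
Proof.
move=> mA; elim: s => [|i s IH]; first by rewrite !big_nil measure0.
rewrite !big_cons; apply: le_trans (measureU2 _ _ _) _ => //.
  exact: bigsetU_measurable.
exact: leeD2l.
Qed.

Lemma geo_fin (R : realType) (C g : R) : 0 <= C -> 0 < g -> g < 1 ->
  (\sum_(0 <= k <oo) (C * g ^+ k)%:E < +oo)%E.
Proof.
move=> C0 g0 g1.
apply: (@le_lt_trans _ _ (C / (1 - g))%:E); last exact: ltry.
apply: lime_le.
  apply: ereal_nondecreasing_is_cvgn => m n mn; apply: lee_sum_nneg_natr => // k _ _.
  by rewrite lee_fin mulr_ge0 // exprn_ge0 // ltW.
apply: nearW => n; rewrite sumEFin lee_fin.
have := @geometric_le_lim R n C g C0 g0; rewrite ger0_norm ?(ltW g0) // => /(_ g1).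
by [].
Qed.

Lemma expR_powR_natl (R : realType) (x y : R) k :
  (expR x ^+ k) `^ y = (expR x `^ y) ^+ k.
Proof.
rewrite -!expRM_natl /powR !gt_eqF ?expR_gt0 // !expRK -expRM_natl.
by congr expR; ring.
Qed.
Theorem lemma3p1 (dm : measure_display) (Omega : measurableType dm)
  (R : realType) (P : probability Omega R) (d : nat) (alpha : R)
  (xi : 'rV[int]_d -> Omega -> R) :
  (0 < d)%N -> d%:R < alpha ->
  pareto_field P alpha xi ->
  forall (T : R), 1 < T ->
  forall z : 'rV[R]_d, inLT alpha T z ->
  {ae P, forall w, exists ys : seq 'rV[R]_d,
      admissible alpha T z ys /\
      path_cost alpha (xi^~ w) T z ys = hT alpha (xi^~ w) T z}.
Proof.
move=> d0 hda [hmeas _ htail] T T1 z hz.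
have dpos : 0 < d%:R :> R by rewrite ltr0n.
have al0 : 0 < alpha by apply: lt_trans hda.
have q0 : 0 < qexp d alpha by rewrite /qexp divr_gt0 // subr_gt0.
have T0 : 0 < T by apply: lt_trans T1.
have lnT : 0 < ln T := ln_gt0 T1.
have a0 : 0 < aT d alpha T by rewrite /aT powR_gt0 // divr_gt0.
have r0 : 0 < rT d alpha T by rewrite /rT powR_gt0 // divr_gt0.
pose L := ln (2 : R).
have L0 : 0 < L by rewrite /L ln_gt0 // ltr1n.
pose s := (alpha + d%:R) / (2 * alpha).
have s0 : 0 < s by rewrite /s divr_gt0 ?addr_gt0 ?mulr_gt0.
have s1 : s < 1 by rewrite /s ltr_pdivrMr ?mulr_gt0 // mul1r; lra.
pose th := expR (s * L).
have th1 : 1 < th by rewrite /th expR_gt1 mulr_gt0.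
have th0 : 0 < th by apply: lt_trans th1.
have th2 : th < 2.
  have -> : (2 : R) = expR L by rewrite /L lnK // posrE.
  by rewrite /th ltr_expR gtr_pMl.
pose g0 := th `^ (- alpha).
have g0E : g0 = expR (- alpha * (s * L)).
  by rewrite /g0 /powR gt_eqF // /th expRK.
pose g := 2 ^+ d * g0.
have gE : g = expR ((d%:R - alpha * s) * L).
  rewrite /g g0E -(@powR_mulrn R 2 d) ?ler0n // /powR gt_eqF ?ltr0n //.
  by rewrite -expRD -/L; congr expR; ring.
have g_pos : 0 < g by rewrite gE expR_gt0.
have g1 : g < 1.
  rewrite gE expR_lt1 pmulr_llt0 // subr_lt0.
  have -> : alpha * s = (alpha + d%:R) / 2.
    by rewrite /s; field; rewrite gt_eqF.
  lra.
pose E x t := xi x @^-1` `]t, +oo[.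
have mE x t : measurable (E x t).
  by have := hmeas x measurableT _ (measurable_itv `]t, +oo[); rewrite setTI.
pose B k := \big[setU/set0]_(f <- enum {ffun 'I_d -> 'I_(2 * (2 ^ k)%N).+1})
  E (boxv d (2 ^ k)%N f) (th ^+ k).
have mB k : measurable (B k) by apply: bigsetU_measurable => f _.
have PB k : (P (B k) <= (4 ^+ d * g ^+ k)%:E)%E.
  apply: le_trans (measure_bigsetU_le _ _ _ P _ _ _ (fun f => mE _ _)) _.
  have hE f : P (E (boxv d (2 ^ k)%N f) (th ^+ k)) = (g0 ^+ k)%:E.
    rewrite htail; last by rewrite exprn_ege1 // ltW.
    by rewrite /g0 /th expR_powR_natl.
  rewrite (eq_bigr (fun _ => (g0 ^+ k)%:E)); last by move=> f _; exact: hE.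
  rewrite sumEFin big_enum /= sumr_const card_ffun !card_ord lee_fin.
  have hN : ((2 * 2 ^ k).+1 ^ d <= 4 ^ d * (2 ^ d) ^ k)%N.
    have e : (4 ^ d * (2 ^ d) ^ k = (4 * 2 ^ k) ^ d)%N.
      by rewrite expnMn; congr (_ * _)%N; rewrite -!expnM mulnC.
    rewrite e leq_exp2r //.
    have : (1 <= 2 ^ k)%N by rewrite expn_gt0.
    exact: aux_le.
  have hN' : (((2 * 2 ^ k).+1 ^ d)%N%:R : R) <= 4 ^+ d * (2 ^+ d) ^+ k.
    by rewrite -!natrX -natrM ler_nat.
  rewrite -[X in X <= _]mulr_natr /g exprMn mulrA [_ * g0 ^+ k]mulrC.
  have g00 : 0 <= g0 by rewrite g0E ltW // expR_gt0.
  by rewrite ler_wpM2l // exprn_ge0.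
pose N2 := \bigcap_N \bigcup_(k in ~` `I_N) B k.
have negN2 : P.-negligible N2.
  have mN2 : measurable N2.
    apply: bigcapT_measurable => N; exact: bigcup_measurable.
  exists N2; split => //.
  apply/eqP; rewrite -measure_le0.
  have fin : (\sum_(0 <= k <oo) P (B k) < +oo)%E.
    apply: (@le_lt_trans _ _ (\sum_(0 <= k <oo) (4 ^+ d * g ^+ k)%:E)%E).
      by apply: lee_nneseries => // k _ _; exact: measure_ge0.
    exact: geo_fin (exprn_ge0 d (ler0n R 4)) g_pos g1.
  have tl := nneseries_tail_cvg fin (fun k _ => measure_ge0 P (B k)).
  rewrite -(cvg_lim _ tl) //.
  apply: lime_ge; first by apply/cvg_ex; eexists; exact: tl.
  apply: nearW => N.
  apply: measure_sigma_subadditive_tail => //.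
  by move=> w /(_ N I).
pose A n := if @unpickle ('rV[int]_d) n is Some x then ~` E x 1 else set0.
have negA : P.-negligible (\bigcup_n A n).
  apply: negligible_bigcup => n; rewrite /A; case: (unpickle n) => [x|].
    exists (~` E x 1); split => //; first exact: measurableC.
    transitivity (1 - P (E x 1%R))%E; first exact: (probability_setC P (mE x 1)).
    rewrite htail ?lexx // powR1 /=.
    by rewrite subee.
  exact: negligible_set0.
apply: negligibleS (negligibleU negA negN2).
move=> w /= hw; apply: NNPP => hn; apply: hw.
have xi1 : forall x, 1 < xi x w.
  move=> x; apply: NNPP => hx; apply: hn; left; exists (pickle x) => //.
  rewrite /A pickleK /E /= => h; apply: hx; move: h.
  by rewrite in_itv /= andbT.
have [K0 HK] : exists K0, forall k, (K0 <= k)%N -> ~ B k w.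
  have h : ~ N2 w by move=> h; apply: hn; right.
  apply: NNPP => hK; apply: h => N _; apply: NNPP => hN; apply: hK.
  exists N => k hk hBk; apply: hN; exists k => //= hlt.
  by have := leq_trans hlt hk; rewrite ltnn.
have G : forall k, (K0 <= k)%N -> growth R d (xi^~ w) th k.
  move=> k hk x hx.
  have [f hf] : exists f, boxv d (2 ^ k)%N f = x.
    apply: boxv_surj => i; rewrite -(ler_int R) intr_norm.
    apply: le_trans (hx i) _.
    have -> : (((2 ^ k)%N%:Z)%:~R : R) = ((2 ^ k)%N)%:R by [].
    by rewrite natrX.
  apply: NNPP => hgt; apply: (HK k hk).
  apply: (@bigsetU_sub _ _ _ _ f); first by rewrite mem_enum.
  rewrite hf /E /= in_itv /= andbT ltNge; exact/negP.
exact: (det_main _ _ _ _ _ q0 a0 r0 xi1 _ th0 th2 _ G z).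
Qed.
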